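(* Let $Q$ be a finite poset, $X_Q$ its cube complex, and let $C(I_i,M_i)$ and $C(I_{i+1},M_{i+1})$ be consecutive cubes $P_i, P_{i+1}$ of a valid cube sequence in $X_Q$. Then every maximal cube of the interval $X[P_i,P_{i+1}]$ contains the vertex corresponding to the order ideal $I_i$.
   Context: For a finite poset $Q$, $X_Q$ is the cube complex whose vertices are the order ideals of $Q$ and with a cube $C(I,M)$ for each order ideal $I$ and subset $M$ of the set of maximal elements of $I$, whose vertices are $I\setminus S$, $S\subseteq M$. A valid cube sequence is a sequence of cubes $C(I_1,M_1),\dots,C(I_k,M_k)$ of $X_Q$ such that (a) $I_1\subset\cdots\subset I_k=Q$; (b) $I_1=M_1$ and $I_j\setminus I_{j-1}\subseteq M_j$ for $1<j\le k$; (c) each $M_j$ is a maximal antichain of $Q$. For cubes $C,D$, the interval $X[C,D]$ is the subcomplex consisting of all cubes all of whose vertices lie on at least one edge geodesic (shortest path along edges) between a vertex of $C$ and a vertex of $D$. *)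

(* Defs.v *)
From mathcomp Require Import all_boot all_order.
Set Implicit Arguments. Unset Strict Implicit. Unset Printing Implicit Defensive.
Import Order.Theory.
Local Open Scope order_scope.

Section CubeComplex.
Variables (d : Order.disp_t) (Q : finPOrderType d).

Definition order_ideal (I : {set Q}) : bool :=
  [forall x, forall y, ((y <= x) && (x \in I)) ==> (y \in I)].

Definition maxel (I : {set Q}) : {set Q} :=
  [set x in I | [forall y in I, ~~ (x < y)]].

Definition antichain (A : {set Q}) : bool :=
  [forall x in A, forall y in A, (x >=< y) ==> (x == y)].

Definition max_antichain (A : {set Q}) : Prop :=
  antichain A /\ forall B : {set Q}, antichain B -> A \subset B -> B = A.

(* a cube C(I,M) is encoded as the pair (I,M) *)
Definition cube := ({set Q} * {set Q})%type.

Definition is_cube (c : cube) : bool := order_ideal c.1 && (c.2 \subset maxel c.1).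

Definition cube_vertices (c : cube) : {set {set Q}} :=
  [set c.1 :\: S | S in powerset c.2].

Definition adj : rel {set Q} := fun J J' =>
  [exists c : cube, [&& is_cube c, #|c.2| == 1%N & cube_vertices c == [set J; J']]
                    && (J != J')].

Definition epath (u : {set Q}) (p : seq {set Q}) (v : {set Q}) : Prop :=
  path adj u p /\ last u p = v.

Definition geodesic (u : {set Q}) (p : seq {set Q}) (v : {set Q}) : Prop :=
  epath u p v /\ forall q, epath u q v -> (size p <= size q)%N.

Definition on_geodesic (x u v : {set Q}) : Prop :=
  exists p, geodesic u p v /\ x \in u :: p.

Definition in_interval (C D E : cube) : Prop :=
  is_cube E /\
  forall x, x \in cube_vertices E ->
    exists a b, [/\ a \in cube_vertices C, b \in cube_vertices D & on_geodesic x a b].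

(* a maximal cube of X[C,D] (cubes ordered by inclusion, i.e. being a face) *)
Definition maximal_in_interval (C D E : cube) : Prop :=
  in_interval C D E /\
  forall E', in_interval C D E' -> cube_vertices E \subset cube_vertices E' ->
    cube_vertices E' = cube_vertices E.

(* valid cube sequence C(I_1,M_1),...,C(I_k,M_k), stored 0-indexed *)
Definition valid_cube_seq (s : seq cube) : Prop :=
  let I j := (nth (set0, set0) s j).1 in
  let M j := (nth (set0, set0) s j).2 in
  [/\ (0 < size s)%N,
      all is_cube s,
      (* (a) *) sorted (fun A B : {set Q} => A \proper B) (map fst s)
                /\ I (size s).-1 = [set: Q],
      (* (b) *) I 0 = M 0 /\ (forall j, (0 < j < size s)%N -> I j :\: I j.-1 \subset M j)
    & (* (c) *) forall j, (j < size s)%N -> max_antichain (M j)].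

End CubeComplex.

(* Main.v *)
Require Import Defs.
From mathcomp Require Import all_boot all_order.
From mathcomp Require Import zify.
Set Implicit Arguments. Unset Strict Implicit. Unset Printing Implicit Defensive.
Import Order.Theory.

Section Proofs.
Local Open Scope order_scope.
Variables (d : Order.disp_t) (Q : finPOrderType d).
Implicit Types (u v w J A B I : {set Q}).

Definition sd u v := (u :\: v) :|: (v :\: u).

Lemma idealP I : reflect (forall x y, y <= x -> x \in I -> y \in I) (order_ideal I).
Proof.
apply: (iffP forallP) => [H x y le xI | H x].
  by move/forallP: (H x) => /(_ y) /implyP; apply; rewrite le xI.
by apply/forallP => y; apply/implyP => /andP [le xI]; exact: H le xI.
Qed.

Lemma maxelP I x : reflect (x \in I /\ forall y, y \in I -> ~~ (x < y)) (x \in maxel I).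
Proof.
rewrite /maxel inE; apply: (iffP andP) => [[xI /forall_inP H]|[xI H]]; split => //.
by apply/forall_inP.
Qed.

Lemma cube_vertP (c : cube Q) (x : {set Q}) :
  reflect (exists2 S : {set Q}, S \subset c.2 & x = c.1 :\: S) (x \in cube_vertices c).
Proof.
rewrite /cube_vertices; apply: (iffP imsetP) => [[S]|[S]]; rewrite ?powersetE => ? ->;
  by exists S; rewrite ?powersetE.
Qed.

Lemma vert_ideal (c : cube Q) (x : {set Q}) : is_cube c -> x \in cube_vertices c -> order_ideal x.
Proof.
case/andP => /idealP Hi Hm /cube_vertP [S HS ->]; apply/idealP => z y le.
rewrite !inE => /andP [zS zI].
rewrite (Hi z y le zI) andbT; apply/negP => yS.
have /maxelP [_ Hmx] := subsetP Hm y (subsetP HS y yS).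
have := Hmx z zI; rewrite lt_neqAle le andbT negbK => /eqP eyz.
by move: zS; rewrite -eyz yS.
Qed.

Lemma adj_sym J J' : adj J J' -> adj J' J.
Proof.
rewrite /adj => /existsP [c /andP [/and3P [H1 H2 /eqP H3] neq]].
by apply/existsP; exists c; rewrite H1 H2 H3 setUC eqxx eq_sym.
Qed.

Lemma adj_rem I m : order_ideal I -> m \in maxel I -> adj I (I :\ m).
Proof.
move=> HI Hm; rewrite /adj; apply/existsP; exists (I, [set m]).
rewrite /is_cube /= HI sub1set Hm cards1 /=.
rewrite /cube_vertices powerset1 imsetU1 imset_set1 /= setD0 eqxx /=.
apply/eqP => e; have := setD11 m I; rewrite -e.
by case/maxelP: Hm => ->.
Qed.

Lemma adj_sd J J' : adj J J' -> #|sd J J'| = 1%N.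
Proof.
rewrite /adj => /existsP [c /andP [/and3P [Hc /cards1P [m Hm] /eqP Hv] neq]].
have vert : forall x, x \in cube_vertices c -> x = c.1 \/ x = c.1 :\ m.
  move=> x /cube_vertP [S]; rewrite Hm subset1 => /orP [/eqP -> -> | /eqP -> ->].
    by right.
  by left; rewrite setD0.
have hJ : J = c.1 \/ J = c.1 :\ m by apply: vert; rewrite Hv !inE eqxx.
have hJ' : J' = c.1 \/ J' = c.1 :\ m by apply: vert; rewrite Hv !inE eqxx orbT.
have key : forall I, m \in I -> #|sd I (I :\ m)| = 1%N.
  move=> I mI; rewrite -(cards1 m); congr #|pred_of_set _|; apply/setP => y; rewrite !inE.
  by case: (y =P m) => [->|]; rewrite ?mI /= ?andbF ?orbF ?andbN ?andbT ?orbT /=; try case: (y \in I).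
have mI : m \in c.1.
  apply/negPn/negP => mI.
  have e : c.1 :\ m = c.1 by apply/setP => y; rewrite !inE; case: (y =P m) => // ->; rewrite (negbTE mI).
  by move: neq; case: hJ => ->; case: hJ' => ->; rewrite ?e eqxx.
move: neq; case: hJ => ->; case: hJ' => ->; rewrite ?eqxx //.
- by rewrite key.
- by rewrite /sd setUC key.
Qed.

Lemma sd_tri u v w : (#|sd u w| <= #|sd u v| + #|sd v w|)%N.
Proof.
apply: leq_trans (leq_card_setU _ _).
apply: subset_leq_card; apply/subsetP => y; rewrite !inE.
by case: (y \in u); case: (y \in v); case: (y \in w).
Qed.

Lemma epath_len u p v : epath u p v -> (#|sd u v| <= size p)%N.
Proof.
elim: p u => [|x p IH] u [/= Hp Hl]; first by rewrite -Hl /sd setDv set0U cards0.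
move/andP: Hp => [a Hp]; apply: leq_trans (sd_tri u x _) _.
by rewrite (adj_sd a) add1n ltnS; apply: IH.
Qed.


Lemma ex_min (S : {set Q}) : S != set0 ->
  exists2 m, m \in S & forall y, y \in S -> ~~ (y < m).
Proof.
case/set0Pn => x0 x0S.
case: (arg_minnP (fun z => #|[set y | y < z]|) x0S) => m mS Hm.
exists m => // y yS; apply/negP => ylt.
have := Hm y yS; rewrite leqNgt => /negP; apply.
apply: proper_card; apply/properP; split.
  by apply/subsetP => z; rewrite !inE => zy; apply: lt_trans zy ylt.
by exists y; rewrite !inE ?ylt ?ltxx.
Qed.

Lemma ex_max (S : {set Q}) : S != set0 ->
  exists2 m, m \in S & forall y, y \in S -> ~~ (m < y).
Proof.
case/set0Pn => x0 x0S.
case: (arg_minnP (fun z => #|[set y | z < y]|) x0S) => m mS Hm.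
exists m => // y yS; apply/negP => ylt.
have := Hm y yS; rewrite leqNgt => /negP; apply.
apply: proper_card; apply/properP; split.
  by apply/subsetP => z; rewrite !inE => zy; apply: lt_trans ylt zy.
by exists y; rewrite !inE ?ylt ?ltxx.
Qed.

Lemma path_ex n u v : order_ideal u -> order_ideal v -> #|sd u v| = n ->
  exists p, epath u p v /\ size p = n.
Proof.
elim: n u => [|n IH] u Iu Iv Hn.
  exists [::]; split => //; split => //=.
  have := cards0_eq Hn => /setP H; apply/setP => y; have := H y; rewrite !inE.
  by case: (y \in u); case: (y \in v).
have : sd u v != set0 by apply/set0Pn; apply/card_gt0P; rewrite Hn.
case: (boolP (u :\: v == set0)) => [/eqP uv0 | uv0] ne.
  have vu0 : v :\: u != set0 by move: ne; rewrite /sd uv0 set0U.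
  case: (ex_min vu0) => m; rewrite inE => /andP [mu mv] Hmin.
  have Iu' : order_ideal (m |: u).
    apply/idealP => z y le; rewrite in_setU1 => /orP [/eqP ez|zu]; last first.
      by rewrite in_setU1 (idealP _ Iu z y le zu) orbT.
    rewrite in_setU1; case: (boolP (y \in u)) => yu; first by rewrite orbT.
    rewrite orbF; subst z.
    have yv : y \in v by apply: (idealP _ Iv m y).
    have := Hmin y; rewrite inE yu yv => /(_ isT).
    by rewrite lt_neqAle le andbT negbK.
  have mmax : m \in maxel (m |: u).
    apply/maxelP; split; first by rewrite in_setU1 eqxx.
    move=> y; rewrite in_setU1 => /orP [/eqP ->|yu]; first by rewrite ltxx.
    apply/negP => lt; move: mu; rewrite (idealP _ Iu y m (ltW lt) yu).
    done.
  have a : adj u (m |: u).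
    apply: adj_sym; have := adj_rem Iu' mmax; by rewrite setU1K.
  have Hn' : #|sd (m |: u) v| = n.
    apply/eqP; rewrite -eqSS -Hn (cardsD1 m (sd u v)) !inE (negbTE mu) mv /= add1n eqSS.
    apply/eqP; congr #|pred_of_set _|; apply/setP => y; rewrite !inE.
    by case: (y =P m) => [->|]; rewrite ?(negbTE mu) ?mv //= ?orbF ?orbT.
  have [p [[Hp Hl] Hs]] := IH _ Iu' Iv Hn'.
  exists (m |: u :: p); split; last by rewrite /= Hs.
  by split => //=; rewrite a Hp.
case: (ex_max uv0) => m; rewrite inE => /andP [mv mu] Hmax.
have mmax : m \in maxel u.
  apply/maxelP; split => // y yu; apply/negP => lt.
  case: (boolP (y \in v)) => yv.
    by move: mv; rewrite (idealP _ Iv y m (ltW lt) yv).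
  by have := Hmax y; rewrite inE yv yu lt => /(_ isT).
have a := adj_rem Iu mmax.
have Iu' : order_ideal (u :\ m).
  apply: (vert_ideal (c := (u, [set m]))); first by rewrite /is_cube /= Iu sub1set mmax.
  by apply/cube_vertP; exists [set m].
have Hn' : #|sd (u :\ m) v| = n.
  apply/eqP; rewrite -eqSS -Hn (cardsD1 m (sd u v)) !inE mu (negbTE mv) /= add1n eqSS.
  apply/eqP; congr #|pred_of_set _|; apply/setP => y; rewrite !inE.
  by case: (y =P m) => [->|]; rewrite ?mu ?(negbTE mv) //= ?orbF ?orbT ?andbT.
have [p [[Hp Hl] Hs]] := IH _ Iu' Iv Hn'.
exists (u :\ m :: p); split; last by rewrite /= Hs.
by split => //=; rewrite a Hp.
Qed.


Ltac bcl h1 h2 := first [ by move: (h1 isT isT) | by move: (h2 isT) | done ].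

Lemma geod_between a p b (x : {set Q}) : order_ideal a -> order_ideal b ->
  geodesic a p b -> x \in a :: p ->
  (forall y, y \in a -> y \in b -> y \in x) /\ (forall y, y \in x -> (y \in a) || (y \in b)).
Proof.
move=> Ia Ib [[Hp Hl] Hmin] xin.
have [q [Hq Hs]] := path_ex Ia Ib (erefl _).
have le1 := Hmin q Hq; rewrite Hs in le1.
move: Hp Hl le1; case/splitPl: xin => p1 p2 Hx.
rewrite cat_path last_cat size_cat Hx => /andP [H1 H2] Hl le1.
have h1 := epath_len (conj H1 Hx).
have h2 := epath_len (conj H2 Hl).
have hU : sd a b \subset sd a x :|: sd x b.
  by apply/subsetP => y; rewrite !inE; case: (y \in a); case: (y \in b); case: (y \in x).
have := subset_leq_card hU; have := cardsUI (sd a x) (sd x b) => e1 e2.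
have e3 : #|sd a x :&: sd x b| = 0%N by lia.
have e4 := cards0_eq e3.
split => y.
  move=> ya yb; apply/negPn/negP => yx.
  have : y \in (set0 : {set Q}) by rewrite -e4 !inE ya yb yx.
  by rewrite inE.
move=> yx; apply/negPn/negP; rewrite negb_or => /andP [ya yb].
have : y \in (set0 : {set Q}) by rewrite -e4 !inE (negbTE ya) (negbTE yb) yx.
by rewrite inE.
Qed.

Lemma between_geod a b (x : {set Q}) : order_ideal a -> order_ideal b -> order_ideal x ->
  (forall y, y \in a -> y \in b -> y \in x) -> (forall y, y \in x -> (y \in a) || (y \in b)) ->
  on_geodesic x a b.
Proof.
move=> Ia Ib Ix H1 H2.
have [p1 [[Hp1 Hl1] Hs1]] := path_ex Ia Ix (erefl _).
have [p2 [[Hp2 Hl2] Hs2]] := path_ex Ix Ib (erefl _).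
have hd : sd a x :&: sd x b = set0.
  apply/setP => y; rewrite !inE; move: (H1 y) (H2 y).
  by case: (y \in a); case: (y \in b); case: (y \in x) => //= h1 h2; bcl h1 h2.
have hU : sd a x :|: sd x b \subset sd a b.
  apply/subsetP => y; rewrite !inE; move: (H1 y) (H2 y).
  by case: (y \in a); case: (y \in b); case: (y \in x) => //= h1 h2; bcl h1 h2.
have := subset_leq_card hU; have := cardsUI (sd a x) (sd x b); rewrite hd cards0 => e1 e2.
exists (p1 ++ p2); split.
  split; first by split; rewrite ?cat_path ?last_cat Hl1 ?Hp1 ?Hp2.
  move=> q Hq; have := epath_len Hq; rewrite size_cat Hs1 Hs2; lia.
move: (mem_last a p1); rewrite Hl1 !inE mem_cat => /orP [->|->] //.
by rewrite orbT.
Qed.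


Lemma vertS (c : cube Q) (S : {set Q}) : S \subset c.2 -> c.1 :\: S \in cube_vertices c.
Proof. by move=> HS; apply/cube_vertP; exists S. Qed.

Lemma core A M B N (E : cube Q) : is_cube (A, M) -> is_cube (B, N) ->
  A \subset B -> B :\: A \subset N ->
  maximal_in_interval (A, M) (B, N) E -> A \in cube_vertices E.
Proof.
case: E => J K => HC HD AB BAN [[HE Hint] Hmax].
have /andP [/= IA MA] := HC; have /andP [/= IB NB] := HD.
have /andP [/= IJ KJ] := HE.
have F1 : J \subset B.
  have Jv : J \in cube_vertices (J, K).
    by have := vertS (c := (J, K)) (sub0set _); rewrite /= setD0.
  have [a [b [aC bD og]]] := Hint J Jv.
  case: og => p [g xin].
  have [_ H2] := geod_between (vert_ideal HC aC) (vert_ideal HD bD) g xin.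
  apply/subsetP => y yJ.
  case/cube_vertP: aC => S _ ea; case/cube_vertP: bD => T _ eb.
  have := H2 y yJ; rewrite ea eb !inE /= => /orP [/andP [_ yA]|/andP [_ //]].
  exact: subsetP AB y yA.
have F2 : forall y, y \in A -> (y \notin J) || (y \in K) -> (y \in M) || (y \in N).
  move=> y yA yx.
  have [a [b [aC bD og]]] := Hint _ (vertS (c := (J, K)) (subxx _)).
  case: og => p [g xin].
  have [H1 _] := geod_between (vert_ideal HC aC) (vert_ideal HD bD) g xin.
  case/cube_vertP: aC => S /= SM ea; case/cube_vertP: bD => T /= TN eb.
  case: (boolP (y \in S)) => yS; first by rewrite (subsetP SM y yS).
  case: (boolP (y \in T)) => yT; first by rewrite (subsetP TN y yT) orbT.
  have := H1 y; rewrite ea eb !inE yS yT yA (subsetP AB y yA) /= => /(_ isT isT).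
  by move: yx; case: (y \in J); case: (y \in K).
have mM : forall y z, y \in M -> z \in A -> ~~ (y < z).
  by move=> y z yM zA; case/maxelP: (subsetP MA y yM) => _; apply.
have mN : forall y z, y \in N -> z \in B -> ~~ (y < z).
  by move=> y z yN zB; case/maxelP: (subsetP NB y yN) => _; apply.
have JB := subsetP F1; have AB' := subsetP AB.
pose J' := J :|: A; pose K' := K :|: (A :\: J) :|: (J :\: A).
have IJ' : order_ideal J'.
  apply/idealP => z y le; rewrite !inE => /orP [zJ|zA].
    by rewrite (idealP _ IJ z y le zJ).
  by rewrite (idealP _ IA z y le zA) orbT.
have KJ' : K' \subset maxel J'.
  apply/subsetP => z zK; apply/maxelP; split.
    move: zK; rewrite !inE => /orP [/orP [zK|/andP [_ ->]]|/andP [_ ->]]; rewrite ?orbT //.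
    by case/maxelP: (subsetP KJ z zK) => ->.
  move=> y yJ'; apply/negP => lt.
  move: zK yJ'; rewrite !inE => /orP [/orP [zK|/andP [zJ zA]]|/andP [zA zJ]] /orP [yJ|yA].
  - by case/maxelP: (subsetP KJ z zK) => _ /(_ y yJ); rewrite lt.
  - case: (boolP (y \in J)) => yJ.
      by case/maxelP: (subsetP KJ z zK) => _ /(_ y yJ); rewrite lt.
    have zA : z \in A by apply: (idealP _ IA y z (ltW lt) yA).
    have /orP [zM|zN] : (z \in M) || (z \in N) by apply: F2; rewrite ?zA ?zK ?orbT.
      by move: (mM z y zM yA); rewrite lt.
    by move: (mN z y zN (AB' y yA)); rewrite lt.
  - by move: zJ; rewrite (idealP _ IJ y z (ltW lt) yJ).
  - have /orP [zM|zN] : (z \in M) || (z \in N) by apply: F2; rewrite ?zA ?zJ.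
      by move: (mM z y zM yA); rewrite lt.
    by move: (mN z y zN (AB' y yA)); rewrite lt.
  - have zN : z \in N by apply: (subsetP BAN); rewrite inE zA (JB z zJ).
    by move: (mN z y zN (JB y yJ)); rewrite lt.
  - have zN : z \in N by apply: (subsetP BAN); rewrite inE zA (JB z zJ).
    by move: (mN z y zN (AB' y yA)); rewrite lt.
have HE' : is_cube (J', K') by rewrite /is_cube /= IJ' KJ'.
have F3 : forall y, y \in A -> y \in K' -> (y \in M) || (y \in N).
  move=> y yA; rewrite !inE => /orP [/orP [yK|/andP [yJ _]]|/andP [yA' _]].
  - by apply: F2; rewrite ?yK ?orbT.
  - by apply: F2; rewrite ?yJ.
  - by move: yA'; rewrite yA.
have Hint' : in_interval (A, M) (B, N) (J', K').
  split => // x xv.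
  have Ix := vert_ideal HE' xv.
  case/cube_vertP: xv => U /= UK ex.
  exists (A :\: (M :\: x)), (B :\: (N :\: x)); split.
  - by apply: vertS; rewrite /= subDset subsetUr.
  - by apply: vertS; rewrite /= subDset subsetUr.
  apply: between_geod => //.
  - by apply: (vert_ideal HC); apply: vertS; rewrite /= subDset subsetUr.
  - by apply: (vert_ideal HD); apply: vertS; rewrite /= subDset subsetUr.
  - move=> y; rewrite !inE => /andP [h1 yA] /andP [h2 _].
    apply/negPn/negP => yx.
    move: h1 h2; rewrite yx /= => yM yN.
    have yU : y \in U by move: yx; rewrite ex !inE yA orbT andbT negbK.
    have := F3 y yA (subsetP UK y yU); by rewrite (negbTE yM) (negbTE yN).
  - move=> y yx; rewrite !inE yx /=.
    have : y \in J' by move: yx; rewrite ex inE => /andP [].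
    by rewrite inE => /orP [/JB ->|/AB' ->]; rewrite ?orbT.
have Hsub : cube_vertices (J, K) \subset cube_vertices (J', K').
  apply/subsetP => x /cube_vertP [U /= UK ->]; apply/cube_vertP.
  exists (U :|: (A :\: J)) => /=.
    rewrite /K' subUset; apply/andP; split; apply/subsetP => y; rewrite !inE; [move/(subsetP UK) => -> // | by move=> h; rewrite h orbT].
  apply/setP => y; rewrite !inE; by case: (y \in J); case: (y \in A); case: (y \in U).
rewrite -(Hmax _ Hint' Hsub); apply/cube_vertP; exists (J :\: A) => /=.
  by rewrite /K' subsetUr.
apply/setP => y; rewrite !inE; by case: (y \in J); case: (y \in A).
Qed.

End Proofs.

Theorem lemma5p3 (d : Order.disp_t) (Q : finPOrderType d)
  (s : seq (cube Q)) (i : nat) :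
  valid_cube_seq s -> i.+1 < size s ->
  forall E : cube Q,
    maximal_in_interval (nth (set0, set0) s i) (nth (set0, set0) s i.+1) E ->
    (nth (set0, set0) s i).1 \in cube_vertices E.
Proof.
move=> [_ Hall [Hsort _] [_ Hb] _] lt E.
have lt' : i < size s by apply: ltnW.
have Hc := (all_nthP (set0, set0) Hall) i lt'.
have Hd := (all_nthP (set0, set0) Hall) i.+1 lt.
have AB : (nth (set0, set0) s i).1 \subset (nth (set0, set0) s i.+1).1.
  have := (sortedP set0 Hsort) i; rewrite size_map => /(_ lt).
  by rewrite !(nth_map (set0, set0)) // => /properP [].
have BAN := Hb i.+1; rewrite lt /= in BAN; have {BAN} BAN := BAN isT.
move: Hc Hd AB BAN; case: (nth _ s i) => A M; case: (nth _ s i.+1) => B N /=.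
exact: core.
Qed.
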